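(* Let $(i,j)\in J$ and let $a_{i,j}=\ell_{i,j}+f_{i,j}(\ell_{i,j}^* )$ be a strongly matricially free Toeplitz operator on $\mathcal{N}$, where $f_{i,j}(w)=\sum_{n=0}^{d}c_{i,j}(n)w^n$ is a polynomial with complex coefficients. Then the R-transform of the distribution $\mu_{i,j}$ of $a_{i,j}$ in the state $\varphi_{i,j}$ is $$R_{i,j}(z)=f_{i,j}(\alpha_{i,j}^2z),$$ where on the right $f_{i,j}$ is the scalar polynomial (constant term the complex number $c_{i,j}(0)$).
   Context: Fock space. Let $J\subseteq\{1,2\}\times\{1,2\}$, $(\alpha_{i,j})_{(i,j)\in J}$ positive reals, $\{e_{i,j}:(i,j)\in J\}$ orthonormal vectors and $\mathcal{F}$ the full Fock space over $\bigoplus_{(i,j)\in J}\mathbb{C}e_{i,j}$ with vacuum $\Omega$. The strongly matricially free Fock space $\mathcal{N}\subseteq\mathcal{F}$ is the closed span of $\Omega$ and all simple tensors $e_{i_1,i_2}^{\otimes n_1}\otimes e_{i_2,i_3}^{\otimes n_2}\otimes\dots\otimes e_{i_{m-1},i_m}^{\otimes n_{m-1}}\otimes e_{i_m,i_m}^{\otimes n_m}$ ($m\ge1$, $n_k\ge1$, $i_1\neq\dots\neq i_m$, all pairs in $J$). With $P$ the projection onto $\mathcal{N}$ and $\ell(e)w=e\otimes w$, set $\ell_{i,j}=\alpha_{i,j}P\ell(e_{i,j})|_{\mathcal{N}}$. Let $\mathcal{N}_{i,j}$ be the closed span of those simple tensors whose first factor is $e_{i,j}$; the internal unit $1_{j,j}$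 is the projection onto $\mathbb{C}\Omega\oplus\mathcal{N}_{j,j}$ and, for $i\neq j$, $1_{i,j}$ is the projection onto $\mathcal{N}\ominus(\mathbb{C}\Omega\oplus\mathcal{N}_{i,i})$. The state $\varphi_{i,j}$ on $B(\mathcal{N})$ is $x\mapsto\langle x\Omega_{i,j},\Omega_{i,j}\rangle$, where $\Omega_{j,j}=\Omega$ and $\Omega_{i,j}=e_{j,j}$ for $i\neq j$ (for off-diagonal $(i,j)$ it is understood that $(j,j)\in J$). The strongly matricially free Toeplitz operator is $a_{i,j}=\ell_{i,j}+f_{i,j}(\ell_{i,j}^* )$ with $f_{i,j}(\ell_{i,j}^* ):=c_{i,j}(0)1_{i,j}+\sum_{n\ge1}c_{i,j}(n)(\ell_{i,j}^* )^n$. The distribution of $x$ in a state $\omega$ is the sequence of moments $\omega(x^n)$; its Cauchy transform is $G(w)=\sum_{n\ge0}\omega(x^n)w^{-n-1}$ (for $|w|$ large) and its R-transform is the power series $R$, analytic near $0$, with $G(1/z+R(z))=z$ for small $|z|>0$. *)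

(* Defs.v *)
From HB Require Import structures.
From mathcomp Require Import all_boot all_order all_algebra.
From mathcomp Require Import complex.
From mathcomp Require Import boolp classical_sets reals topology normedtype sequences.

Set Implicit Arguments.
Unset Strict Implicit.
Unset Printing Implicit Defensive.

Import Order.TTheory GRing.Theory Num.Theory.
Import numFieldTopology.Exports numFieldNormedType.Exports.
Local Open Scope ring_scope.

Definition idx := ('I_2 * 'I_2)%type.

(* Simple tensors e_{w_1} (x) ... (x) e_{w_n} of the full Fock space are
   indexed by words w; the empty word is the vacuum Omega.  These simple
   tensors form an orthonormal basis of the full Fock space. *)
Definition word := seq idx.

Section Fock.
Variable C : numClosedFieldType.

(* A vector of the (algebraic) Fock space: a finite formal linear combination
   of basis words. *)
Definition vec := seq (C * word).
(* An operator, given by its values on basis words, extended linearly. *)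
Definition op := word -> vec.

Definition apply (T : op) (v : vec) : vec :=
  flatten [seq [seq (x.1 * y.1, y.2) | y <- T x.2] | x <- v].
(* coefficient of the basis vector u in v, i.e. <v, u> *)
Definition coef (v : vec) (u : word) : C := \sum_(x <- v | x.2 == u) x.1.

Definition op_add (T S : op) : op := fun w => T w ++ S w.
Definition op_scale (c : C) (T : op) : op :=
  fun w => [seq (c * y.1, y.2) | y <- T w].
Definition op_comp (T S : op) : op := fun w => apply T (S w).
Definition op_id : op := fun w => [:: (1, w)].
Definition op_pow (T : op) (n : nat) : op := iter n (op_comp T) op_id.

Definition creation (e : idx) : op := fun w => [:: (1, e :: w)].
Definition annihilation (e : idx) : op := fun w =>
  match w with
  | [::] => [::]
  | e' :: w' => if e' == e then [:: (1, w')] else [::]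
  end.

(* blocks of a sequence of indices i_1, ..., i_m:
   (i_1,i_2), (i_2,i_3), ..., (i_{m-1},i_m), (i_m,i_m) *)
Definition blocks (s : seq 'I_2) : seq idx :=
  zip s (rcons (behead s) (last ord0 s)).

(* the word e_{i1,i2}^{n1} (x) ... (x) e_{im,im}^{nm} belongs to the strongly
   matricially free Fock space N *)
Definition inN (J : {set idx}) (w : word) : Prop :=
  w = [::] \/
  exists (s : seq 'I_2) (ns : seq nat),
    [/\ (0 < size s)%N, size ns = size s, all (fun n => 0 < n)%N ns,
        (forall k, (k.+1 < size s)%N -> nth ord0 s k != nth ord0 s k.+1) &
        (all (fun p => p \in J) (blocks s) /\
         w = flatten [seq nseq x.1 x.2 | x <- zip ns (blocks s)])].

Definition projN (J : {set idx}) : op :=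
  fun w => if `[< inN J w >] then [:: (1, w)] else [::].

(* l_{i,j} = alpha_{i,j} P l(e_{i,j}) |_N  (we precompose with P to encode
   the restriction to N) and its adjoint on N *)
Definition ell (J : {set idx}) (a : C) (e : idx) : op :=
  op_scale a (op_comp (projN J) (op_comp (creation e) (projN J))).
Definition ellstar (J : {set idx}) (a : C) (e : idx) : op :=
  op_scale a (op_comp (projN J) (op_comp (annihilation e) (projN J))).

Definition unit_ij (J : {set idx}) (e : idx) : op := fun w =>
  if `[< inN J w >] &&
     (if e.1 == e.2 then (w == [::]) || (head e w == e)
      else (w != [::]) && (head e w != (e.1, e.1)))
  then [:: (1, w)] else [::].

Definition Omega_ij (e : idx) : word := if e.1 == e.2 then [::] else [:: (e.2, e.2)].

(* strongly matricially free Toeplitz operator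
   a_{i,j} = l_{i,j} + c(0) 1_{i,j} + sum_{n=1}^{d} c(n) (l_{i,j}^* )^n
   with f = p, c(n) = p`_n, d = deg p *)
Definition toeplitz (J : {set idx}) (a : C) (e : idx) (p : {poly C}) : op :=
  op_add (ell J a e)
   (op_add (op_scale p`_0 (unit_ij J e))
      (fun w => flatten [seq op_scale p`_n (op_pow (ellstar J a e) n) w
                        | n <- iota 1 (size p).-1])).

(* the moments phi_{i,j}(x^n) = < x^n Omega_{i,j}, Omega_{i,j} > *)
Definition moment (T : op) (Om : word) (n : nat) : C :=
  coef (op_pow T n Om) Om.

End Fock.

HB.instance Definition _ (R : realType) :=
  PseudoPointedMetric.copy R[i] (R[i])^o.

(* R-transform characterization: with G(w) = sum_n m_n w^{-n-1} (convergent
   for |w| large), R satisfies G(1/z + R(z)) = z for small |z| > 0. *)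
Definition is_R_transform (R : realType) (m : nat -> R[i]) (Rt : R[i] -> R[i]) : Prop :=
  exists (r rho : R), 0 < rho /\
    (forall w : R[i], (r%:C)%C < `|w| ->
        cvgn (series (fun n => m n * w ^- n.+1))) /\
    (forall z : R[i], 0 < `|z| < (rho%:C)%C ->
        (r%:C)%C < `|z^-1 + Rt z| /\
        limn (series (fun n => m n * (z^-1 + Rt z) ^- n.+1)) = z).

(* Main.v *)
Require Import Defs.
From HB Require Import structures.
From mathcomp Require Import all_boot all_order all_algebra.
From mathcomp Require Import complex.
From mathcomp Require Import boolp classical_sets reals topology normedtype sequences.
Import Order.TTheory GRing.Theory Num.Theory.
Import numFieldTopology.Exports numFieldNormedType.Exports.
Set Implicit Arguments.
Unset Strict Implicit.
Unset Printing Implicit Defensive.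
Local Open Scope ring_scope.
From mathcomp Require Import zify ring.
Local Open Scope classical_set_scope.
Section Ana.
Variable R : realType.

Lemma normC_real (x : R) : (`|x%:C| = `|x|%:C)%C.
Proof. by rewrite normc_def /= expr0n /= addr0 sqrtr_sqr. Qed.

Lemma pos_realC (e : R[i]) : 0 < e -> ((complex.Re e)%:C)%C = e /\ 0 < complex.Re e.
Proof.
move=> e0; split; first by apply: RRe_real; apply: gtr0_real.
by move: e0; rewrite ltcE => /andP[_].
Qed.

Lemma normi : `|'i%C : R[i]| = 1.
Proof. by rewrite normc_def /= expr0n /= add0r expr1n sqrtr1. Qed.

Lemma cvgC_parts (u : nat -> R[i]) a b :
  (fun n => complex.Re (u n)) @ \oo --> a -> (fun n => complex.Im (u n)) @ \oo --> b ->
  (u : nat -> (R[i])^o) @ \oo --> ((a +i* b)%C : (R[i])^o).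
Proof.
move=> Ha Hb; apply/cvgrPdist_lt => e e0.
have [ee er0] := pos_realC e0.
have er2 : 0 < complex.Re e / 2 by rewrite divr_gt0.
move/cvgrPdist_lt: Ha => /(_ _ er2) ha; move/cvgrPdist_lt: Hb => /(_ _ er2) hb.
near=> n.
rewrite -ee.
have -> : ((a +i* b)%C - u n : R[i]) = ((a - complex.Re (u n))%:C + 'i * (b - complex.Im (u n))%:C)%C.
  by case: (u n) => x y; apply/eqP; rewrite eq_complex /=; simpc.
apply: le_lt_trans; first exact: ler_normD.
rewrite normrM normC_real normC_real.
have -> : `|'i%C : R[i]| = 1 by rewrite normc_def /= expr0n /= add0r expr1n sqrtr1.
rewrite mul1r -rmorphD /= ltcR.
rewrite [complex.Re e](splitr (complex.Re e)); apply: ltrD; [near: n; exact: ha | near: n; exact: hb].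
Unshelve. all: by end_near. Qed.


Lemma Re_sum (u : nat -> R[i]) n : complex.Re (series u n) = series (fun k => complex.Re (u k)) n.
Proof.
rewrite /series /=; elim: n => [|n IH]; first by rewrite !big_geq.
by rewrite !big_nat_recr //= -IH; case: (\sum_(0 <= k < n) u k) => ? ?; case: (u n).
Qed.

Lemma Im_sum (u : nat -> R[i]) n : complex.Im (series u n) = series (fun k => complex.Im (u k)) n.
Proof.
rewrite /series /=; elim: n => [|n IH]; first by rewrite !big_geq.
by rewrite !big_nat_recr //= -IH; case: (\sum_(0 <= k < n) u k) => ? ?; case: (u n).
Qed.

Lemma real_series_geo (v : nat -> R) (M q : R) : 0 <= q < 1 ->
  (forall n, `|v n| <= M * q ^+ n) -> cvgn (series v).
Proof.
move=> /andP[q0 q1] hv.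
apply: (@normed_cvg R R).
apply: (@series_le_cvg R _ (fun n => M * q ^+ n)).
- by move=> n; exact: normr_ge0.
- by move=> n; apply: le_trans (hv n).
- exact: hv.
apply/cvg_ex; exists (M / (1 - q)).
by apply: (@cvg_geometric_series R M q); rewrite ger0_norm.
Qed.

Lemma cvg_series_geo (u : nat -> R[i]) (M q : R) : 0 <= q < 1 ->
  (forall n, `|u n| <= ((M * q ^+ n)%:C)%C) -> cvgn (series (u : nat -> (R[i])^o)).
Proof.
move=> hq hu.
have hR : cvgn (series (fun k => complex.Re (u k))).
  apply: (real_series_geo hq) => n; rewrite -lecR; apply: le_trans (hu n).
  exact: normc_ge_Re.
have hI : cvgn (series (fun k => complex.Im (u k))).
  apply: (real_series_geo hq) => n; rewrite -lecR; apply: le_trans (hu n).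
  have -> : complex.Im (u n) = complex.Re (u n * (- 'i))%C by case: (u n) => x y /=; simpc.
  apply: le_trans (normc_ge_Re _) _.
  by rewrite normrM normrN normi mulr1.
move/cvg_ex: hR => [a Ha]; move/cvg_ex: hI => [b Hb].
apply/cvg_ex; exists ((a +i* b)%C : (R[i])^o).
apply: cvgC_parts.
- by rewrite (funext (fun n => Re_sum u n)).
- by rewrite (funext (fun n => Im_sum u n)).
Qed.

Lemma cvg_tail (S : nat -> R[i]) (z : R[i]) (C q : R) : 0 <= q < 1 ->
  (forall N, `|z - S N| <= ((C * q ^+ N)%:C)%C) ->
  (S : nat -> (R[i])^o) @ \oo --> (z : (R[i])^o).
Proof.
move=> /andP[q0 q1] hS; apply/cvgrPdist_lt => e e0.
have [ee er0] := pos_realC e0.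
have hg : geometric C q @ \oo --> (0 : R) by apply: cvg_geometric; rewrite ger0_norm.
move/cvgrPdist_lt: hg => /(_ _ er0) hg.
near=> N.
apply: le_lt_trans (hS N) _.
rewrite -ee ltcR.
apply: le_lt_trans (ler_norm _) _.
have hN : `|0 - geometric C q N| < complex.Re e by near: N; exact: hg.
by move: hN; rewrite sub0r normrN.
Unshelve. all: by end_near. Qed.

End Ana.
Section FockPart.
Variable C : numClosedFieldType.
Variables (J : {set idx}) (i j : 'I_2) (b : C) (p : {poly C}).
Hypothesis hij : (i, j) \in J.
Hypothesis hjj : i != j -> (j, j) \in J.

Definition e0 : idx := (i, j).
Definition Om := Omega_ij e0.
Definition wk (k : nat) : word := nseq k e0 ++ Om.

Lemma wk_size k : size (wk k) = (k + size Om)%N.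
Proof. by rewrite /wk size_cat size_nseq. Qed.

Lemma wk_inj a c : (wk a == wk c) = (a == c).
Proof.
apply/eqP/eqP => [h|->//]; have := congr1 size h; rewrite !wk_size => /eqP.
by rewrite eqn_add2r => /eqP.
Qed.

Lemma inN_wk k : inN J (wk k).
Proof.
rewrite /wk /Om /Omega_ij /e0 /=.
case: eqP => [eij|/eqP nij].
  have hii : (i, i) \in J by rewrite {2}eij.
  rewrite -eij.
  case: k => [|k]; first by left.
  right; exists [:: i], [:: k.+1]; split => //=; try (by case); by rewrite hii cats0.
case: k => [|k].
  right; exists [:: j], [:: 1%N]; split => //=; try (by case); by rewrite hjj.
right; exists [:: i; j], [:: k.+1; 1%N]; split => //=; try (by case => [|[|]]); by rewrite hij hjj // cats0.
Qed.

Lemma projN_wk k : projN C J (wk k) = [:: (1, wk k)].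
Proof. by rewrite /projN asboolT //; exact: inN_wk. Qed.

Lemma ell_wk k : ell J b e0 (wk k) = [:: (b, wk k.+1)].
Proof.
rewrite /ell /op_scale /op_comp projN_wk /apply /=.
have -> : e0 :: wk k = wk k.+1 by [].
by rewrite projN_wk /= !mulr1.
Qed.

Lemma ellstar_wkS k : ellstar J b e0 (wk k.+1) = [:: (b, wk k)].
Proof.
rewrite /ellstar /op_scale /op_comp projN_wk /apply /=.
by rewrite eqxx /= projN_wk /= !mulr1.
Qed.

Lemma ellstar_wk0 : ellstar J b e0 (wk 0) = [::].
Proof.
rewrite /ellstar /op_scale /op_comp projN_wk /apply /=.
rewrite /wk /Om /Omega_ij /e0 /=; case: eqP => [//|/eqP nij] /=.
by rewrite xpair_eqE eq_sym (negbTE nij).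
Qed.

Lemma unit_wk k : unit_ij C J e0 (wk k) = [:: (1, wk k)].
Proof.
rewrite /unit_ij asboolT; last exact: inN_wk.
rewrite /wk /Om /Omega_ij /e0 /=; case: eqP => [<-|/eqP nij] /=.
  by case: k => [|k] //=; rewrite !eqxx ?orbT.
have nji : (j == i) = false by rewrite eq_sym (negbTE nij).
by case: k => [|k] /=; rewrite xpair_eqE ?eqxx nji.
Qed.

Lemma pow_ellstar_wk n k : op_pow (ellstar J b e0) n (wk k) =
  if (n <= k)%N then [:: (b ^+ n, wk (k - n))] else [::].
Proof.
elim: n => [|n IH]; first by rewrite subn0 expr0.
rewrite /op_pow iterS -/(op_pow _ n) /op_comp IH.
case: (ltnP n k) => hnk.
  rewrite (ltnW hnk).
  have -> : (k - n = (k - n.+1).+1)%N by lia.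
  by rewrite /apply /= ellstar_wkS /= exprSr.
case: (n =P k) => [->|hne].
  by rewrite leqnn subnn /apply /= ellstar_wk0.
have -> : (n <= k)%N = false by lia.
by [].
Qed.


Lemma coef_nil u : coef ([::] : vec C) u = 0.
Proof. by rewrite /coef big_nil. Qed.

Lemma coef_cons (x : C * word) v u : coef (x :: v) u = (if x.2 == u then x.1 else 0) + coef v u.
Proof. by rewrite /coef big_cons; case: ifP; rewrite ?add0r. Qed.

Lemma coef_cat (v1 v2 : vec C) u : coef (v1 ++ v2) u = coef v1 u + coef v2 u.
Proof. by rewrite /coef big_cat. Qed.

Lemma coef_scale c (v : vec C) u : coef [seq (c * y.1, y.2) | y <- v] u = c * coef v u.
Proof.
elim: v => [|x v IH] /=; first by rewrite coef_nil mulr0.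
by rewrite !coef_cons IH mulrDr /=; case: ifP; rewrite ?mulr0.
Qed.

Lemma coef_flatten (vs : seq (vec C)) u : coef (flatten vs) u = \sum_(v <- vs) coef v u.
Proof.
elim: vs => [|v vs IH] /=; first by rewrite coef_nil big_nil.
by rewrite coef_cat IH big_cons.
Qed.

Lemma coef_apply (T : op C) v u : coef (apply T v) u = \sum_(x <- v) x.1 * coef (T x.2) u.
Proof.
rewrite /apply coef_flatten big_map; apply: eq_bigr => x _.
exact: coef_scale.
Qed.

Definition Tseq (f : nat -> C) (m : nat) : C :=
  (if m is m'.+1 then b * f m' else 0) + \sum_(n < size p) p`_n * b ^+ n * f (m + n)%N.
Definition delta (k : nat) : nat -> C := fun l => if l == k then 1 else 0.

Lemma coef_wk1 (c : C) k m : coef [:: (c, wk k)] (wk m) = if k == m then c else 0.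
Proof. by rewrite coef_cons coef_nil addr0 /= wk_inj. Qed.

Lemma toep_wk_coef k m : coef (toeplitz J b e0 p (wk k)) (wk m) = Tseq (delta k) m.
Proof.
rewrite /toeplitz /op_add !coef_cat ell_wk coef_wk1 /op_scale coef_scale unit_wk coef_wk1.
rewrite coef_flatten big_map.
under eq_bigr => n _ do rewrite coef_scale pow_ellstar_wk.
rewrite /Tseq; congr (_ + _).
  by case: m => [|m] //=; rewrite eqSS /delta eq_sym; case: eqP; rewrite ?mulr1 ?mulr0.
rewrite -(big_mkord xpredT (fun n => p`_n * b ^+ n * delta k (m + n)%N)).
case hs: (size p) => [|s].
  rewrite big_geq // /=.
  have -> : p`_0 = 0 by rewrite nth_default ?hs.
  by rewrite mul0r big_nil addr0.
rewrite /index_iota subn0 /= big_cons /=.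
rewrite addn0 expr0 mulr1 /delta [m == k]eq_sym.
congr (_ + _).
apply: eq_bigr => n _.
case: (leqP n k) => hnk.
  rewrite coef_wk1.
  have -> : ((k - n)%N == m) = (m + n == k)%N by apply/eqP/eqP; lia.
  by case: eqP; rewrite ?mulr1 ?mulr0.
rewrite coef_nil mulr0.
have -> : (m + n == k)%N = false by apply/eqP; lia.
by rewrite mulr0.
Qed.


Definition kk (w : word) : nat := (size w - size Om)%N.
Definition isW (w : word) : bool := w == wk (kk w).
Definition supp (v : vec C) : bool := all (fun x => isW x.2) v.

Lemma isW_wk k : isW (wk k).
Proof. by rewrite /isW /kk wk_size addnK. Qed.

Lemma kk_wk k : kk (wk k) = k.
Proof. by rewrite /kk wk_size addnK. Qed.

Lemma supp_cat v1 v2 : supp (v1 ++ v2) = supp v1 && supp v2.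
Proof. exact: all_cat. Qed.

Lemma supp_scale c v : supp [seq (c * y.1, y.2) | y <- v] = supp v.
Proof. by rewrite /supp all_map. Qed.

Lemma supp_toep_wk k : supp (toeplitz J b e0 p (wk k)).
Proof.
rewrite /toeplitz /op_add !supp_cat ell_wk /op_scale supp_scale unit_wk /= !isW_wk /=.
elim: (iota 1 (size p).-1) => [|n s IH] //=.
rewrite supp_cat IH andbT /op_scale supp_scale pow_ellstar_wk.
by case: ifP => //= _; rewrite isW_wk.
Qed.

Lemma supp_apply v : supp v -> supp (apply (toeplitz J b e0 p) v).
Proof.
elim: v => [|x v IH] //= /andP[hx hv].
rewrite /apply /= supp_cat supp_scale -/(apply _ v) IH // andbT.
by rewrite (eqP hx) supp_toep_wk.
Qed.

Lemma TseqL (a c : C) f g m :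
  Tseq (fun l => a * f l + c * g l) m = a * Tseq f m + c * Tseq g m.
Proof.
rewrite /Tseq; case: m => [|m].
  rewrite !add0r mulr_sumr mulr_sumr -big_split /=; apply: eq_bigr => n _.
  ring.
rewrite !mulrDr mulr_sumr mulr_sumr.
rewrite addrACA; congr (_ + _); first by ring.
rewrite -big_split /=; apply: eq_bigr => n _.
ring.
Qed.

Lemma Tseq0 m : Tseq (fun _ => 0) m = 0.
Proof.
rewrite /Tseq big1 ?addr0; last by move=> n _; rewrite mulr0.
by case: m => //= m; rewrite mulr0.
Qed.

Lemma Tseq_sum (v : vec C) (g : C * word -> nat -> C) m :
  Tseq (fun l => \sum_(x <- v) x.1 * g x l) m = \sum_(x <- v) x.1 * Tseq (g x) m.
Proof.
elim: v => [|x v IH].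
  have -> : (fun l => \sum_(x <- [::]) x.1 * g x l) = (fun _ => 0 : C).
    by apply: funext => l; rewrite big_nil.
  by rewrite Tseq0 big_nil.
rewrite big_cons -IH.
have -> : (fun l => \sum_(y <- x :: v) y.1 * g y l) = (fun l => x.1 * g x l + 1 * \sum_(y <- v) y.1 * g y l).
  by apply: funext => l; rewrite big_cons mul1r.
by rewrite TseqL mul1r.
Qed.

Lemma rep_decomp v : supp v ->
  (fun l => coef v (wk l)) = (fun l => \sum_(x <- v) x.1 * delta (kk x.2) l).
Proof.
move=> hv; apply: funext => l; elim: v hv => [|x v IH] /=.
  by rewrite coef_nil big_nil.
move=> /andP[hx hv]; rewrite coef_cons big_cons IH //; congr (_ + _).
rewrite (eqP hx) wk_inj /delta kk_wk eq_sym.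
by case: eqP; rewrite ?mulr1 ?mulr0.
Qed.

Lemma rep_apply v m : supp v ->
  coef (apply (toeplitz J b e0 p) v) (wk m) = Tseq (fun l => coef v (wk l)) m.
Proof.
move=> hv; rewrite coef_apply (rep_decomp hv) Tseq_sum.
apply: eq_big_seq => x xv; congr (_ * _).
have hx : isW x.2 by move/allP: hv => /(_ x xv).
by rewrite (eqP hx) toep_wk_coef kk_wk.
Qed.

Lemma rep_pow n : supp (op_pow (toeplitz J b e0 p) n Om) /\
  (fun l => coef (op_pow (toeplitz J b e0 p) n Om) (wk l)) = iter n Tseq (delta 0).
Proof.
elim: n => [|n [hs IH]].
  have hO : Om = wk 0 by [].
  split; first by rewrite /= /op_id hO /= isW_wk.
  apply: funext => l; rewrite /= /op_id {1}hO coef_wk1 /delta eq_sym //.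
have -> : op_pow (toeplitz J b e0 p) n.+1 Om = apply (toeplitz J b e0 p) (op_pow (toeplitz J b e0 p) n Om) by [].
split; first exact: supp_apply.
apply: funext => l; rewrite rep_apply // IH.
by [].
Qed.

Lemma moment_iter n : moment (toeplitz J b e0 p) Om n = iter n Tseq (delta 0) 0.
Proof.
have [_ h] := rep_pow n.
by rewrite /moment -(congr1 (fun f => f 0%N) h).
Qed.


Definition Kc : C := `|b| + \sum_(n < size p) `|p`_n| * `|b| ^+ n.

Lemma sumK_ge0 : 0 <= \sum_(n < size p) `|p`_n| * `|b| ^+ n.
Proof. by apply: sumr_ge0 => n _; rewrite mulr_ge0 ?exprn_ge0. Qed.

Lemma Kc_geb : `|b| <= Kc.
Proof. by rewrite /Kc lerDl sumK_ge0. Qed.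

Lemma Kc_ge0 : 0 <= Kc.
Proof. exact: le_trans (normr_ge0 _) Kc_geb. Qed.

Lemma Tseq_bound f B : (forall l, `|f l| <= B) -> forall m, `|Tseq f m| <= Kc * B.
Proof.
move=> hf m; have B0 : 0 <= B := le_trans (normr_ge0 _) (hf 0%N).
rewrite /Kc mulrDl; apply: le_trans (ler_normD _ _) _; apply: lerD.
  case: m => [|m]; first by rewrite normr0 mulr_ge0.
  by rewrite normrM ler_wpM2l.
apply: le_trans (ler_norm_sum _ _ _) _; rewrite mulr_suml; apply: ler_sum => n _.
by rewrite !normrM normrX ler_wpM2l // mulr_ge0 ?exprn_ge0.
Qed.

Lemma iter_bound n f B : (forall l, `|f l| <= B) -> forall m, `|iter n Tseq f m| <= Kc ^+ n * B.
Proof.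
move=> hf; elim: n => [|n IH] m; first by rewrite expr0 mul1r.
by rewrite iterS exprS -mulrA; apply: Tseq_bound.
Qed.

Lemma delta_bound l : `|delta 0 l| <= 1.
Proof. by rewrite /delta; case: eqP; rewrite ?normr1 ?normr0. Qed.

Lemma iterL n (a c : C) f g :
  iter n Tseq (fun l => a * f l + c * g l) = (fun m => a * iter n Tseq f m + c * iter n Tseq g m).
Proof.
elim: n => [|n IH] //=; rewrite IH; apply: funext => m; exact: TseqL.
Qed.

Lemma eigen (z : C) m : z != 0 ->
  Tseq (fun k => (b * z) ^+ k) m =
  z^-1 * (b * z) ^+ m - z^-1 * delta 0 m + p.[b ^+ 2 * z] * (b * z) ^+ m.
Proof.
move=> z0; rewrite /Tseq horner_coef mulr_suml.
have -> : \sum_(n < size p) p`_n * b ^+ n * (b * z) ^+ (m + n) =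
          \sum_(n < size p) p`_n * (b ^+ 2 * z) ^+ n * (b * z) ^+ m.
  apply: eq_bigr => n _; rewrite exprD !exprMn; ring.
congr (_ + _).
case: m => [|m]; first by rewrite /delta /= expr0 mulr1 subrr.
rewrite /delta /= mulr0 subr0 exprS.
by field.
Qed.

Lemma delta_eigen (z : C) : z != 0 ->
  delta 0 = (fun l => (z * (z^-1 + p.[b ^+ 2 * z])) * (b * z) ^+ l + (- z) * Tseq (fun k => (b * z) ^+ k) l).
Proof.
move=> z0; apply: funext => l; rewrite eigen //.
by field.
Qed.


Definition aseq (z : C) (n : nat) : C := iter n Tseq (fun k => (b * z) ^+ k) 0.
Definition wz (z : C) : C := z^-1 + p.[b ^+ 2 * z].

Lemma moment_split n z : z != 0 ->
  iter n Tseq (delta 0) 0 = z * wz z * aseq z n - z * aseq z n.+1.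
Proof.
move=> z0; rewrite (delta_eigen z0) iterL /aseq iterSr.
by rewrite mulNr.
Qed.

Lemma partial_sum N z : z != 0 -> wz z != 0 ->
  \sum_(0 <= n < N) iter n Tseq (delta 0) 0 * (wz z) ^- n.+1 =
  z - z * aseq z N * (wz z) ^- N.
Proof.
move=> z0 w0.
have hF : forall n, iter n Tseq (delta 0) 0 * (wz z) ^- n.+1 =
   - (z * aseq z n.+1 * (wz z) ^- n.+1 - z * aseq z n * (wz z) ^- n).
  move=> n; rewrite (moment_split n z0) exprS invfM.
  have wn : wz z ^+ n != 0 by rewrite expf_neq0.
  by field; rewrite wn w0.
under eq_bigr => n _ do rewrite hF.
rewrite sumrN telescope_sumr // opprB expr0 invr1 mulr1 /aseq /= expr0 mulr1.
by [].
Qed.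


Lemma horner_bound x : `|x| <= `|b| -> `|p.[x]| <= Kc - `|b|.
Proof.
move=> hx; rewrite /Kc addrAC subrr add0r horner_coef.
apply: le_trans (ler_norm_sum _ _ _) _; apply: ler_sum => n _.
rewrite normrM normrX ler_wpM2l //.
by apply: lerXn2r; rewrite // ?qualifE /=; exact: normr_ge0.
Qed.

End FockPart.

Section Final.
Variable R : realType.

Lemma convC (X Y : R[i]) n : 0 <= X -> 0 <= Y ->
  (((complex.Re X * complex.Re Y ^+ n)%:C)%C) = X * Y ^+ n.
Proof.
move=> X0 Y0; rewrite rmorphM GRing.rmorphXn /=.
by rewrite !RRe_real // ger0_real.
Qed.

Lemma qbounds (K w : R[i]) : 0 < K -> K < `|w| ->
  0 <= complex.Re (K / `|w|) < 1.
Proof.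
move=> K0 Kw; have w0 : 0 < `|w| := lt_trans K0 Kw.
have q0 : 0 <= K / `|w| by rewrite divr_ge0 // ltW.
have hq : ((complex.Re (K / `|w|))%:C)%C = K / `|w| by rewrite RRe_real // ger0_real.
by rewrite -lecR -ltcR hq q0 /= ltr_pdivrMr // mul1r.
Qed.

End Final.

Unset Implicit Arguments.
Set Strict Implicit.

Theorem proposition4p1 (R : realType) (J : {set idx}) (alpha : idx -> R)
  (i j : 'I_2) (p : {poly R[i]}) :
  (forall e, e \in J -> 0 < alpha e) ->
  (i, j) \in J ->
  (i != j -> (j, j) \in J) ->
  is_R_transform
    (moment (toeplitz J ((alpha (i, j))%:C)%C (i, j) p) (Omega_ij (i, j)))
    (fun z => p.[((alpha (i, j) ^+ 2)%:C)%C * z]).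
Proof.
move=> hpos hij hjj.
set a := alpha (i, j).
have a0 : 0 < a := hpos _ hij.
set b : R[i] := (a%:C)%C.
have b0 : 0 < `|b| by rewrite /b normC_real ltcR normr_gt0 gt_eqF.
have hm : moment (toeplitz J b (i, j) p) (Omega_ij (i, j)) =
          (fun n => iter n (Tseq b p) (delta R[i] 0) 0).
  by apply: funext => n; exact: (moment_iter b p hij hjj n).
rewrite hm.
have hP : (fun z => p.[((a ^+ 2)%:C)%C * z]) = (fun z => p.[b ^+ 2 * z]).
  by rewrite GRing.rmorphXn.
rewrite hP.
set K := Kc b p.
have K0 : 0 < K := lt_le_trans b0 (Kc_geb b p).
set kr := complex.Re K.
have hK : (kr%:C)%C = K := RRe_real (gtr0_real K0).
have kr0 : 0 < kr by rewrite -ltcR hK.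
have hmb : forall n, `|iter n (Tseq b p) (delta R[i] 0) 0| <= K ^+ n.
  by move=> n; rewrite -[K ^+ n]mulr1; apply: iter_bound; exact: delta_bound.
exists kr, (2 * kr)^-1; split; first by rewrite invr_gt0 mulr_gt0.
split.
  move=> w; rewrite hK => hw.
  have w0 : 0 < `|w| := lt_trans K0 hw.
  apply: (@cvg_series_geo R _ (complex.Re (`|w|^-1)) (complex.Re (K / `|w|))).
    exact: qbounds.
  move=> n; rewrite convC ?invr_ge0 ?divr_ge0 ?normr_ge0 ?(ltW K0) //.
  rewrite normrM normfV normrX exprMn exprVn exprS invfM.
  rewrite mulrA [X in _ <= X]mulrA [_^-1 * K ^+ n]mulrC.
  rewrite ler_wpM2r ?mulr_ge0 ?invr_ge0 ?exprn_ge0 ?normr_ge0 //.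
  by rewrite ler_wpM2r ?invr_ge0 ?normr_ge0.
move=> z /andP[z0 zr].
have zn0 : z != 0 by rewrite -normr_gt0.
have hr : (((2 * kr)^-1)%:C)%C = (2 * K)^-1.
  by rewrite GRing.fmorphV rmorphM /= hK GRing.rmorph_nat.
rewrite hr in zr.
have K2 : 0 < 2 * K by rewrite mulr_gt0.
have hz2 : `|z| * (2 * K) < 1 by rewrite -ltr_pdivlMr // div1r.
have hbz : `|b * z| <= 1.
  rewrite normrM; apply: le_trans (ltW hz2); rewrite mulrC ler_wpM2l //.
  apply: le_trans (Kc_geb b p) _; rewrite -/K mulr_natl mulr2n lerDr ltW //.
have hx : `|b ^+ 2 * z| <= `|b|.
  by rewrite expr2 -mulrA normrM ler_piMr.
have hp := horner_bound p hx.
have hzi : 2 * K < `|z^-1|.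
  by rewrite normfV -div1r ltr_pdivlMr // mulrC.
have hw : K < `|wz b p z|.
  apply: lt_le_trans (lerB_normD _ _); rewrite ltrBrDr.
  apply: le_lt_trans hzi; rewrite mulr_natl mulr2n lerD2l.
  by apply: le_trans hp _; rewrite lerBlDr lerDl.
have w0 : wz b p z != 0 by rewrite -normr_gt0 (lt_trans K0 hw).
split; first by rewrite hK; exact: hw.
apply: (cvg_lim (@norm_hausdorff _ (R[i])^o)).
apply: (@cvg_tail R _ z (complex.Re `|z|) (complex.Re (K / `|wz b p z|))).
  exact: qbounds.
move=> N.
have -> : series (fun n => iter n (Tseq b p) (delta R[i] 0) 0 * (z^-1 + p.[b ^+ 2 * z]) ^- n.+1) N
   = \sum_(0 <= n < N) iter n (Tseq b p) (delta R[i] 0) 0 / wz b p z ^+ n.+1 by [].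
rewrite (partial_sum N zn0 w0) opprB addrC subrK.
rewrite convC ?divr_ge0 ?normr_ge0 ?(ltW K0) //.
rewrite !normrM normfV normrX exprMn exprVn -!mulrA.
rewrite ler_wpM2l ?normr_ge0 // ler_wpM2r ?invr_ge0 ?exprn_ge0 ?normr_ge0 //.
rewrite -[K ^+ N]mulr1; apply: iter_bound => l.
by rewrite normrX exprn_ile1.
Qed.
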